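(* Let $n\ge 2$, $p\in[0,1]$ and let $\Phi$ be the $\mathfrak{su}_n$ channel. Then $$S_{\min}:=\min_{\rho}S(\Phi(\rho))=-\frac{np}{n+1}\ln\Big(\frac{np}{n^2-1}\Big)-\Big(1-\frac{np}{n+1}\Big)\ln\Big(1-\frac{np}{n+1}\Big),$$ where the minimum is over all $n\times n$ density matrices and $S(\sigma)=-\operatorname{Tr}(\sigma\ln\sigma)$ is the von Neumann entropy (with $0\ln 0=0$). Moreover, for fixed $p\in[0,1]$, $\lim_{n\to\infty}S_{\min}/\ln n=p$.
   Context: The $\mathfrak{su}_n$ channel is $\Phi(\rho)=(1-p)\rho+\frac{pn}{2(n^2-1)}\sum_{i=1}^{n^2-1}X_i\rho X_i$, where $X_1,\dots,X_{n^2-1}$ are traceless Hermitian $n\times n$ matrices forming a basis of $i\,\mathfrak{su}_n$ with $\operatorname{Tr}(X_iX_j)=2\delta_{ij}$ (generalized Gell-Mann matrices). A density matrix is a positive semidefinite matrix of trace 1. *)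

(* Defs.v *)
From HB Require Import structures.
From mathcomp Require Import all_boot all_order all_algebra.
From mathcomp Require Import all_classical all_reals all_analysis.
From mathcomp.real_closed Require Import complex.

Set Implicit Arguments.
Unset Strict Implicit.
Unset Printing Implicit Defensive.

Import Order.TTheory GRing.Theory Num.Theory.
Local Open Scope ring_scope.

Section QDefs.
Variable R : realType.
Local Notation C := (R[i]).

Definition adjmx (n : nat) (A : 'M[C]_n) : 'M[C]_n := (map_mx (@conjc R) A)^T.

Definition hermitian (n : nat) (A : 'M[C]_n) : Prop := adjmx A = A.

Definition psd (n : nat) (A : 'M[C]_n) : Prop :=
  hermitian A /\ forall v : 'cV[C]_n, 0 <= ((map_mx (@conjc R) v)^T *m A *m v) 0 0.

Definition density (n : nat) (A : 'M[C]_n) : Prop := psd A /\ \tr A = 1.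

(* X_1, ..., X_{n^2-1}: traceless Hermitian with Tr(X_i X_j) = 2 delta_ij
   (hence a basis of i su_n, e.g. the generalized Gell-Mann matrices) *)
Definition gell_mann_basis (n : nat) (X : 'I_(n ^ 2 - 1) -> 'M[C]_n) : Prop :=
  (forall i, hermitian (X i)) /\ (forall i, \tr (X i) = 0) /\
  (forall i j, \tr (X i *m X j) = (2 * (i == j)%:R)).

Definition su_channel (n : nat) (X : 'I_(n ^ 2 - 1) -> 'M[C]_n) (p : R)
  (rho : 'M[C]_n) : 'M[C]_n :=
  ((1 - p)%:C)%C *: rho +
  ((p * n%:R / (2 * (n ^ 2 - 1)%:R))%:C)%C *: \sum_i (X i *m rho *m X i).

(* eigenvalues (with multiplicity) = roots of the characteristic polynomial *)
Definition eigvals (n : nat) (A : 'M[C]_n) : seq C :=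
  sval (closed_field_poly_normal (char_poly A)).

Definition xlnx (x : R) : R := if x == 0 then 0 else x * ln x.

(* von Neumann entropy S(s) = - Tr (s ln s) = - sum_lambda lambda ln lambda *)
Definition vN_entropy (n : nat) (A : 'M[C]_n) : R :=
  - \sum_(l <- eigvals A) xlnx (complex.Re l).

Definition is_min_output_entropy (n : nat) (X : 'I_(n ^ 2 - 1) -> 'M[C]_n)
  (p s : R) : Prop :=
  (exists rho : 'M[C]_n, density rho /\ vN_entropy (su_channel X p rho) = s) /\
  (forall rho : 'M[C]_n, density rho -> s <= vN_entropy (su_channel X p rho)).

Definition Smin_formula (n : nat) (p : R) : R :=
  - (n%:R * p / (n%:R + 1)) * ln (n%:R * p / (n%:R ^+ 2 - 1))
  - (1 - n%:R * p / (n%:R + 1)) * ln (1 - n%:R * p / (n%:R + 1)).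

End QDefs.

(* Main.v *)
Require Import Defs.
From HB Require Import structures.
From mathcomp Require Import all_boot all_order all_algebra.
From mathcomp Require Import all_classical all_reals all_analysis.
From mathcomp.real_closed Require Import complex.
From mathcomp Require Import ring lra.
Import Order.TTheory GRing.Theory Num.Theory.
Import numFieldNormedType.Exports.
Local Open Scope classical_set_scope.
Local Open Scope ring_scope.

Section Spec.
Variable R : realType.
Local Notation C := (R[i]).

Lemma eigvalsE {n} (A : 'M[C]_n) : char_poly A = \prod_(z <- eigvals A) ('X - z%:P).
Proof.
rewrite /eigvals; case: closed_field_poly_normal => r /= {1}->.
by rewrite (monicP (char_poly_monic A)) scale1r.
Qed.
Lemma size_eigvals {n} (A : 'M[C]_n) : size (eigvals A) = n.
Proof.
have := size_char_poly A; rewrite eigvalsE size_prod_XsubC.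
by case.
Qed.
Lemma sum_eigvals {n} (A : 'M[C]_n) : \sum_(z <- eigvals A) z = \tr A.
Proof.
case: n A => [|n] A.
  by have /size0nil -> := size_eigvals A; rewrite big_nil /mxtrace big_ord0.
have := @char_poly_trace _ n.+1 A isT; have E : n.+1.-1 = (size (eigvals A)).-1 by rewrite size_eigvals.
rewrite eigvalsE E coefPn_prod_XsubC ?size_eigvals //.
by move=> /eqP; rewrite eqr_opp => /eqP.
Qed.
Lemma eigvals_trig {n} (A : 'M[C]_n) : is_trig_mx A ->
  perm_eq (eigvals A) [seq A i i | i <- enum 'I_n].
Proof.
move=> /char_poly_trig; rewrite eigvalsE => E.
apply: prod_XsubC_eq; rewrite E big_map; apply: congr_big => //.
by rewrite enumT.
Qed.

Lemma prod_cmul (c : {poly C}) (rs : seq C) (F : C -> {poly C}) :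
  \prod_(r <- rs) (c * F r) = c ^+ size rs * \prod_(r <- rs) F r.
Proof.
elim: rs => [|r rs IH]; first by rewrite !big_nil expr0 mulr1.
by rewrite !big_cons IH exprS /=; rewrite -!mulrA; congr (_ * _); rewrite mulrCA.
Qed.

Lemma char_poly_affine {n} (A : 'M[C]_n) (a b : C) :
  char_poly (a *: A + b%:M) = \prod_(r <- eigvals A) ('X - (a * r + b)%:P).
Proof.
have [->|a0] := eqVneq a 0.
  rewrite scale0r add0r char_poly_trig ?scalar_mx_is_trig //.
  transitivity (\prod_(i < n) ('X - b%:P)).
    by apply: eq_bigr => i _; rewrite /scalar_mx mxE eqxx mulr1n.
  under [in RHS]eq_bigr do rewrite mul0r add0r.
  by rewrite prodr_const card_ord big_const_seq count_predT size_eigvals iter_mulr mulr1.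
pose q : {poly C} := a^-1 *: ('X - b%:P).
have Hq : a%:P * q = 'X - b%:P by rewrite mul_polyC scalerA mulfV // scale1r.
have E1 : char_poly A \Po q = \prod_(r <- eigvals A) (q - r%:P).
  rewrite eigvalsE rmorph_prod /=; apply: eq_bigr => r _.
  by rewrite rmorphB /= comp_polyX comp_polyC.
have E2 : char_poly A \Po q = \det (q%:M - map_mx (@polyC _) A).
  rewrite /char_poly -det_map_mx; congr (\det _); apply/matrixP => i j.
  rewrite /scalar_mx !mxE rmorphB /= rmorphMn /= comp_polyX comp_polyC.
  by case: (i == j).
have E3 : char_poly (a *: A + b%:M) = a%:P ^+ n * (char_poly A \Po q).
  rewrite E2 -detZ /char_poly; congr (\det _); apply/matrixP => i j.
  rewrite /scalar_mx !mxE; case: (i == j) => /=.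
    rewrite mulr1n mulrBr Hq polyCD polyCM; ring.
  rewrite !mulr0n addr0 !sub0r mulrN polyCM; ring.
rewrite E3 E1 -[X in _ ^+ X](size_eigvals A) -prod_cmul; apply: eq_bigr => r _.
rewrite mulrBr Hq polyCD polyCM; ring.
Qed.

Lemma eigvals_affine {n} (A : 'M[C]_n) (a b : C) :
  perm_eq (eigvals (a *: A + b%:M)) [seq a * r + b | r <- eigvals A].
Proof.
apply: prod_XsubC_eq; rewrite -eigvalsE char_poly_affine big_map //.
Qed.


Lemma psd_eig_ge0 {n} (A : 'M[C]_n) r : psd A -> r \in eigvals A -> 0 <= r.
Proof.
move=> [_ HA] Hr.
have : eigenvalue A r by rewrite eigenvalue_root_char eigvalsE root_prod_XsubC.
move=> /eigenvalueP [u Hu u0].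
pose v : 'cV[C]_n := (map_mx (@conjc R) u)^T.
have Hv : (map_mx (@conjc R) v)^T = u.
  by apply/matrixP => i j; rewrite !mxE conjcK (ord1 i).
have := HA v; rewrite Hv Hu -scalemxAl mxE.
have Hs : 0 < (u *m v) 0 0.
  rewrite mxE lt_def; apply/andP; split; last first.
    by apply: sumr_ge0 => k _; rewrite !mxE mulcJ_ge0.
  apply/eqP => /psumr_eq0P H.
  have {}H := H (fun k _ => ltac:(rewrite /v !mxE; exact: mulcJ_ge0)).
  move/negP: u0; apply; apply/eqP/matrixP => i j; rewrite (ord1 i) mxE.
  have := H j isT; rewrite /v !mxE => /eqP; rewrite mulf_eq0 conjc_eq0 orbb => /eqP //.
by rewrite pmulr_lge0.
Qed.
End Spec.

Section Compl.
Variable R : realType.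
Local Notation C := (R[i]).


Lemma sum_delta_r {n} (F : 'I_n -> C) d : \sum_l F l * (l == d)%:R = F d.
Proof.
rewrite (bigD1 d) //= eqxx mulr1 big1 ?addr0 // => l /negbTE ->.
by rewrite mulr0.
Qed.

Lemma tr_mul_delta {n} (A : 'M[C]_n) d c : \tr (A *m delta_mx d c) = A c d.
Proof.
rewrite /mxtrace (bigD1 c) //= big1 => [|k Hk].
  rewrite addr0 mxE -(sum_delta_r (A c) d); apply: eq_bigr => l _.
  by rewrite mxE eqxx andbT.
rewrite mxE big1 // => l _; rewrite mxE (negbTE Hk) andbF mulr0 //.
Qed.

Variable n : nat.
Hypothesis n0 : (0 < n)%N.
Variable X : 'I_(n ^ 2 - 1) -> 'M[C]_n.
Hypothesis HX : gell_mann_basis X.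

Let trX i : \tr (X i) = 0. Proof. by case: HX => _ [H _]. Qed.
Let trXX i j : \tr (X i *m X j) = 2 * (i == j)%:R. Proof. by case: HX => _ [_ H]. Qed.
Let nC0 : (n%:R : C) != 0. Proof. by rewrite pnatr_eq0 -lt0n. Qed.
Let twoC0 : (2 : C) != 0. Proof. by rewrite pnatr_eq0. Qed.

Definition Pm (M : 'M[C]_n) : 'M[C]_n :=
  (\tr M / n%:R) *: 1%:M + 2^-1 *: \sum_i \tr (X i *m M) *: X i.

Lemma Pm0 : Pm 0 = 0.
Proof.
rewrite /Pm mxtrace0 mul0r scale0r add0r big1 ?scaler0 // => i _.
by rewrite mulmx0 mxtrace0 scale0r.
Qed.

Lemma Pm_add A B : Pm (A + B) = Pm A + Pm B.
Proof.
rewrite /Pm mxtraceD mulrDl scalerDl.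
have -> : \sum_i \tr (X i *m (A + B)) *: X i =
   \sum_i \tr (X i *m A) *: X i + \sum_i \tr (X i *m B) *: X i.
  by rewrite -big_split; apply: eq_bigr => i _; rewrite mulmxDr mxtraceD scalerDl.
by rewrite scalerDr addrACA.
Qed.

Lemma Pm_scale (k : C) A : Pm (k *: A) = k *: Pm A.
Proof.
rewrite /Pm mxtraceZ scalerDr !scalerA mulrA; congr (_ + _).
rewrite mulrC -scalerA scaler_sumr; congr (_ *: _); apply: eq_bigr => i _.
by rewrite -scalemxAr mxtraceZ scalerA.
Qed.

Definition sX : seq 'M[C]_n := 1%:M :: map X (enum 'I_(n ^ 2 - 1)).

Lemma Pm_fix x : x \in sX -> Pm x = x.
Proof.
rewrite inE => /orP [/eqP -> | /mapP [j _ ->]].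
  rewrite /Pm mxtrace1 divff // scale1r big1 ?scaler0 ?addr0 // => i _.
  by rewrite mulmx1 trX scale0r.
rewrite /Pm trX mul0r scale0r add0r (bigD1 j) //= big1 => [|i Hij].
  by rewrite addr0 trXX eqxx mulr1 scalerA mulVf // scale1r.
by rewrite trXX (negbTE Hij) mulr0 scale0r.
Qed.

Lemma nth_mapX k (Hk : (k < n ^ 2 - 1)%N) :
  (map X (enum 'I_(n ^ 2 - 1)))`_k = X (Ordinal Hk).
Proof.
rewrite (nth_map (Ordinal Hk)) ?size_enum_ord //; congr X; apply: val_inj => /=.
by rewrite nth_enum_ord.
Qed.

Lemma sX_orth i j : (i < size sX)%N -> (j < size sX)%N ->
  \tr (sX`_i *m sX`_j) = if i == j then (if i is 0 then n%:R else 2) else 0.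
Proof.
rewrite /= size_map size_enum_ord !ltnS.
case: i => [|i]; case: j => [|j] //= Hi Hj.
- by rewrite mulmx1 mxtrace1.
- by rewrite mul1mx nth_mapX trX.
- by rewrite mulmx1 nth_mapX trX.
rewrite !nth_mapX trXX eqSS.
have -> : (Ordinal Hi == Ordinal Hj) = (i == j) by [].
by case: (i == j); rewrite ?mulr1 ?mulr0.
Qed.

Lemma sX_free : free sX.
Proof.
apply: (introT (@vector.freeP _ _ _ (in_tuple sX))) => k Hk j.
have := congr1 (fun M => \tr (sX`_j *m M)) Hk; rewrite /=.
rewrite mulmx0 mxtrace0 mulmx_sumr raddf_sum (bigD1 j) //= big1 => [|i Hij].
  rewrite -scalemxAr mxtraceZ addr0 sX_orth ?eqxx //= => /eqP.
  rewrite mulf_eq0 => /orP [/eqP -> //|].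
  case: (nat_of_ord j) => [|j'] /= /eqP H; [by move: nC0; rewrite H eqxx | by move: twoC0; rewrite H eqxx].
by rewrite -scalemxAr mxtraceZ sX_orth // ifN ?mulr0 // eq_sym.
Qed.

Lemma sX_span : (<<sX>> = fullv)%VS.
Proof.
apply/eqP; rewrite eqEdim subvf /= dimvf dim_matrix (eqP sX_free) /=.
by rewrite size_map size_enum_ord subn1 prednK ?expn_gt0 ?n0 // mulnn.
Qed.

Lemma Pm_id M : Pm M = M.
Proof.
have HM : M \in <<sX>>%VS by rewrite sX_span memvf.
have [k -> _] := vector.free_span sX_free HM.
rewrite (big_morph Pm Pm_add Pm0); apply: eq_big_seq => x Hx.
by rewrite Pm_scale Pm_fix.
Qed.

Lemma key a b c d : \sum_i X i a b * X i c d =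
  2 * ((a == d)%:R * (b == c)%:R) - 2 / n%:R * ((a == b)%:R * (c == d)%:R).
Proof.
have := congr1 (fun M : 'M[C]_n => M a b) (Pm_id (delta_mx d c)).
rewrite /Pm -{1}[delta_mx d c]mul1mx tr_mul_delta /scalar_mx !mxE summxE.
under eq_bigr do rewrite mxE tr_mul_delta.
move=> E.
have E2 : \sum_i X i c d * X i a b =
   2 * (((a == d) && (b == c))%:R - (c == d)%:R / n%:R * (a == b)%:R).
  by rewrite -E addrAC subrr add0r mulrA mulfV // mul1r.
rewrite (eq_bigr (fun i => X i c d * X i a b)) => [|i _]; last by rewrite mulrC.
rewrite E2 -mulnb natrM; ring.
Qed.

Lemma T_eq (A : 'M[C]_n) :
  \sum_i (X i *m A *m X i) = (2 * \tr A)%:M - (2 / n%:R) *: A.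
Proof.
apply/matrixP => a e; rewrite summxE /scalar_mx !mxE.
transitivity (\sum_b \sum_c A b c * \sum_i X i a b * X i c e).
  under eq_bigr => i _ do rewrite mxE.
  under eq_bigr => i _ do under eq_bigr => c _ do rewrite mxE big_distrl.
  rewrite exchange_big /=.
  under eq_bigr => c _ do rewrite exchange_big /=.
  rewrite exchange_big /=; apply: eq_bigr => b _; apply: eq_bigr => c _.
  rewrite mulr_sumr; apply: eq_bigr => i _ /=; ring.
under eq_bigr => b _ do under eq_bigr => c _ do rewrite key mulrBr.
under eq_bigr => b _ do rewrite sumrB.
rewrite sumrB; congr (_ - _).
  transitivity (\sum_b (2 * (a == e)%:R) * A b b).
    apply: eq_bigr => b _.
    rewrite (eq_bigr (fun c => (2 * (a == e)%:R * A b c) * (c == b)%:R)) => [|c _].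
      by rewrite sum_delta_r.
    by rewrite [b == c]eq_sym; ring.
  by rewrite -mulr_sumr -mulr_natr /mxtrace; ring.
transitivity (\sum_b (2 / n%:R * A b e) * (b == a)%:R); last by rewrite sum_delta_r.
apply: eq_bigr => b _.
rewrite (eq_bigr (fun c => (2 / n%:R * (a == b)%:R * A b c) * (c == e)%:R)) => [|c _].
  by rewrite sum_delta_r [a == b]eq_sym; ring.
by ring.
Qed.
End Compl.

Section Real.
Variable R : realType.

Lemma xlnxE (y : R) : xlnx y = y * ln y.
Proof. by rewrite /xlnx; case: eqP => [->|]; rewrite ?mul0r. Qed.

Lemma xlnx_tangent (y m : R) : 0 <= y -> 0 < m -> y * ln m + y - m <= y * ln y.
Proof.
move=> y0 m0; have [->|yp] := eqVneq y 0; first by rewrite !mul0r add0r sub0r oppr_le0 ltW.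
have yp' : 0 < y by rewrite lt_def yp y0.
have H := @le_ln1Dx R (m / y - 1).
have E : 1 + (m / y - 1) = m / y by ring.
rewrite E in H.
have := H (ltac:(rewrite ltrBrDr addrC subrr; exact: divr_gt0)).
rewrite ln_div ?posrE // => H2.
have H3 : y * (ln m - ln y) <= y * (m / y - 1) by rewrite ler_wpM2l // ltW.
rewrite mulrBr mulrBr mulrCA mulfV ?mulr1 // in H3.
lra.
Qed.

Lemma xlnx_convex (t y0 y1 : R) : 0 <= y0 -> 0 <= y1 -> 0 <= t -> t <= 1 ->
  xlnx (t * y1 + (1 - t) * y0) <= t * xlnx y1 + (1 - t) * xlnx y0.
Proof.
move=> h0 h1 t0 t1; rewrite !xlnxE.
set m := t * y1 + (1 - t) * y0.
have a0 : 0 <= t * y1 by rewrite mulr_ge0.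
have b0 : 0 <= (1 - t) * y0 by rewrite mulr_ge0 // subr_ge0.
have [m0|mp] := eqVneq m 0.
  have e1 : t * y1 = 0 by apply/eqP; rewrite eq_le a0 andbT; move: m0; rewrite /m; lra.
  have e2 : (1 - t) * y0 = 0 by apply/eqP; rewrite eq_le b0 andbT; move: m0; rewrite /m; lra.
  by rewrite m0 mul0r !mulrA e1 e2 !mul0r addr0.
have mp' : 0 < m by rewrite lt_def mp addr_ge0.
have T1 := @xlnx_tangent y1 m h1 mp'.
have T0 := @xlnx_tangent y0 m h0 mp'.
have U1 : t * (y1 * ln m + y1 - m) <= t * (y1 * ln y1) by rewrite ler_wpM2l.
have U0 : (1 - t) * (y0 * ln m + y0 - m) <= (1 - t) * (y0 * ln y0) by rewrite ler_wpM2l // subr_ge0.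
have -> : m * ln m = t * (y1 * ln m + y1 - m) + (1 - t) * (y0 * ln m + y0 - m) by rewrite /m; ring.
exact: lerD.
Qed.

Lemma sum_lin (lam : seq R) (K1 K0 : R) :
  \sum_(x <- lam) (x * K1 + (1 - x) * K0) =
  (\sum_(x <- lam) x) * K1 + ((size lam)%:R - \sum_(x <- lam) x) * K0.
Proof.
elim: lam => [|x lam IH]; first by rewrite !big_nil /=; ring.
rewrite !big_cons IH /= mulrS; ring.
Qed.

Lemma sum_bound (lam : seq R) (a b : R) :
  (forall x, x \in lam -> 0 <= x) -> \sum_(x <- lam) x = 1 -> 0 <= b -> 0 <= a + b ->
  \sum_(x <- lam) xlnx (a * x + b) <= xlnx (a + b) + ((size lam)%:R - 1) * xlnx b.
Proof.
move=> H0 H1 hb hab.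
have le1 : forall x, x \in lam -> x <= 1.
  move=> x Hx; rewrite -H1 (perm_big _ (perm_to_rem Hx)) big_cons lerDl.
  rewrite big_seq; apply: sumr_ge0 => y Hy; apply: H0.
  exact: (mem_rem Hy).
apply: (@le_trans _ _ (\sum_(x <- lam) (x * xlnx (a + b) + (1 - x) * xlnx b))).
  rewrite big_seq [X in _ <= X]big_seq; apply: ler_sum => x Hx.
  have -> : a * x + b = x * (a + b) + (1 - x) * b by ring.
  by apply: xlnx_convex => //; [exact: H0 | exact: le1].
by rewrite sum_lin H1 mul1r.
Qed.

Lemma sq_neq1 (x : R) : 2 <= x -> x ^+ 2 - 1 != 0.
Proof.
move=> h; rewrite subr_eq0; apply/eqP => H.
have H2 : x * x = 1 by rewrite -expr2.
nra.
Qed.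

Lemma p1_neq0 (x : R) : 2 <= x -> x + 1 != 0.
Proof. by move=> h; apply: lt0r_neq0; lra. Qed.
Lemma x_neq0 (x : R) : 2 <= x -> x != 0.
Proof. by move=> h; apply: lt0r_neq0; lra. Qed.

Lemma bb_ge0_gen (x p : R) : 2 <= x -> 0 <= p -> 0 <= x * p / (x ^+ 2 - 1).
Proof.
move=> h hp; rewrite divr_ge0 ?mulr_ge0 //; first lra.
have : 4 <= x ^+ 2 by rewrite expr2; nra.
lra.
Qed.
Lemma ab_ge0_gen (x p : R) : 2 <= x -> p <= 1 -> 0 <= 1 - x * p / (x + 1).
Proof.
move=> h hp; rewrite subr_ge0 ler_pdivrMr; last lra.
nra.
Qed.
End Real.

Section Part1.
Variable R : realType.
Local Notation C := (R[i]).
Variables (p : R) (n : nat) (X : 'I_(n ^ 2 - 1) -> 'M[C]_n).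
Hypotheses (hp0 : 0 <= p) (hp1 : p <= 1) (hn : (2 <= n)%N) (HX : gell_mann_basis X).

Let n0 : (0 < n)%N. Proof. exact: ltnW. Qed.

Definition cc := p * n%:R / (2 * (n ^ 2 - 1)%:R).
Definition aa := 1 - p - cc * 2 / n%:R.
Definition bb := cc * 2.

Lemma chan_eq (rho : 'M[C]_n) : \tr rho = 1 -> su_channel X p rho = aa%:C%C *: rho + (bb%:C%C)%:M.
Proof.
move=> Htr; rewrite /su_channel (@T_eq R n n0 X HX) Htr mulr1 -/cc.
rewrite scalerBr scalerA scale_scalar_mx [(_%:M - _)]addrC addrA -scalerBl.
congr (_ + _); [congr (_ *: _) | congr (_%:M)].
  by rewrite /aa !(rmorphB, rmorphM, rmorph1, fmorphV, rmorph_nat); ring.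
by rewrite /bb !(rmorphM, rmorph_nat).
Qed.

Definition lam (rho : 'M[C]_n) : seq R := [seq complex.Re r | r <- eigvals rho].

Lemma eig_real (rho : 'M[C]_n) r : density rho -> r \in eigvals rho ->
  r = (complex.Re r)%:C%C /\ 0 <= complex.Re r.
Proof.
move=> [Hpsd _] Hr; have := @psd_eig_ge0 R n rho r Hpsd Hr.
by case: r {Hr} => x y; rewrite lecE /= => /andP [/eqP -> H].
Qed.

Lemma ReD (x y : C) : complex.Re (x + y) = complex.Re x + complex.Re y.
Proof. by case: x; case: y. Qed.

Lemma Re_sum (s : seq C) : \sum_(r <- s) complex.Re r = complex.Re (\sum_(r <- s) r).
Proof. by elim: s => [|x s IH]; rewrite ?big_nil // !big_cons IH ReD. Qed.

Lemma lam_ge0 rho : density rho -> forall x, x \in lam rho -> 0 <= x.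
Proof. by move=> Hd x /mapP [r Hr ->]; case: (@eig_real rho r Hd Hr). Qed.

Lemma lam_sum rho : density rho -> \sum_(x <- lam rho) x = 1.
Proof. by move=> [_ Htr]; rewrite /lam big_map Re_sum sum_eigvals Htr. Qed.

Lemma size_lam rho : size (lam rho) = n.
Proof. by rewrite /lam size_map size_eigvals. Qed.

Lemma vN_chan rho : density rho ->
  vN_entropy (su_channel X p rho) = - \sum_(x <- lam rho) xlnx (aa * x + bb).
Proof.
move=> Hd; have Htr := Hd.2.
rewrite /vN_entropy chan_eq // (perm_big _ (eigvals_affine _ _ _ _)) big_map /lam big_map.
congr (- _); apply: eq_big_seq => r Hr.
have [Er _] := @eig_real rho r Hd Hr.
by rewrite {1}Er -rmorphM -rmorphD.
Qed.

Local Notation nr := (n%:R : R).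
Let nr2 : 2 <= nr. Proof. by rewrite (ler_nat R 2 n). Qed.
Let NrE : ((n ^ 2 - 1)%:R : R) = nr ^+ 2 - 1.
Proof. by rewrite natrB ?expn_gt0 ?n0 // natrX. Qed.

Lemma EbbE : bb = nr * p / (nr ^+ 2 - 1).
Proof. rewrite /bb /cc NrE; field; exact: sq_neq1. Qed.

Lemma EabE : aa + bb = 1 - nr * p / (nr + 1).
Proof.
rewrite /aa /bb /cc NrE; field.
by apply/and3P; split; [exact: p1_neq0 | exact: sq_neq1 | exact: x_neq0].
Qed.

Lemma bb_ge0 : 0 <= bb.
Proof. by rewrite EbbE bb_ge0_gen. Qed.

Lemma ab_ge0 : 0 <= aa + bb.
Proof. by rewrite EabE ab_ge0_gen. Qed.

Lemma Smin_eq : Smin_formula n p = - (xlnx (aa + bb) + (nr - 1) * xlnx bb).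
Proof.
have E : (nr - 1) * bb = nr * p / (nr + 1).
  rewrite EbbE; field.
  by apply/andP; split; [exact: p1_neq0 | exact: sq_neq1].
have E2 : (nr - 1) * (bb * ln bb) = nr * p / (nr + 1) * ln (nr * p / (nr ^+ 2 - 1)).
  by rewrite mulrA E EbbE.
rewrite !xlnxE EabE E2 /Smin_formula; ring.
Qed.

Lemma lower rho : density rho -> Smin_formula n p <= vN_entropy (su_channel X p rho).
Proof.
move=> Hd; rewrite Smin_eq vN_chan // lerN2.
have := @sum_bound R (lam rho) aa bb (@lam_ge0 rho Hd) (@lam_sum rho Hd) bb_ge0 ab_ge0.
by rewrite size_lam.
Qed.

Lemma quad_delta (u : 'rV[C]_n) (v : 'cV[C]_n) i0 :
  (u *m delta_mx i0 i0 *m v) 0 0 = u 0 i0 * v i0 0.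
Proof.
rewrite mxE (bigD1 i0) //= big1 => [|k Hk].
  rewrite addr0 mxE -(@sum_delta_r R n (fun l => u 0 l) i0); congr (_ * _).
  by apply: eq_bigr => l _; rewrite mxE eqxx andbT.
rewrite mxE big1 ?mul0r // => l _; rewrite mxE (negbTE Hk) andbF mulr0 //.
Qed.

Lemma pure_density i0 : density (delta_mx i0 i0 : 'M[C]_n).
Proof.
split; last first.
  by rewrite -[delta_mx _ _]mul1mx (@tr_mul_delta R n) /scalar_mx mxE eqxx.
split.
  apply/matrixP => i j; rewrite /adjmx !mxE conjc_nat.
  by rewrite andbC.
move=> v; rewrite quad_delta !mxE mulrC; exact: mulcJ_ge0.
Qed.

Lemma Re_nat (b : bool) : complex.Re (b%:R : C) = b%:R.
Proof. by case: b. Qed.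

Lemma pure_val i0 : vN_entropy (su_channel X p (delta_mx i0 i0)) = Smin_formula n p.
Proof.
rewrite vN_chan; last exact: pure_density.
rewrite Smin_eq; congr (- _).
have P1 : perm_eq (lam (delta_mx i0 i0))
    [seq complex.Re ((delta_mx i0 i0 : 'M[C]_n) i i) | i <- enum 'I_n].
  have Ht : is_trig_mx (delta_mx i0 i0 : 'M[C]_n).
    apply/is_trig_mxP => i j Hij; rewrite mxE; case: (i =P i0) => [Ei|] //; case: (j =P i0) => [Ej|] //.
    by move: Hij; rewrite Ei Ej ltnn.
  by move: (@eigvals_trig R n _ Ht) => /(perm_map (@complex.Re R)); rewrite -map_comp.
rewrite (perm_big _ P1) big_map.
have -> : \sum_(i <- enum 'I_n) xlnx (aa * complex.Re ((delta_mx i0 i0 : 'M[C]_n) i i) + bb) =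
   \sum_i xlnx (aa * complex.Re ((delta_mx i0 i0 : 'M[C]_n) i i) + bb).
  by apply: congr_big => //; rewrite enumT.
rewrite (bigD1 i0) //= mxE eqxx Re_nat /= mulr1; congr (_ + _).
rewrite (eq_bigr (fun _ => xlnx bb)) => [|i Hi]; last by rewrite mxE (negbTE Hi) Re_nat mulr0 add0r.
by rewrite sumr_const cardC1 card_ord -subn1 -[LHS]mulr_natl natrB.
Qed.

Lemma part1 : is_min_output_entropy X p (Smin_formula n p).
Proof.
split; first by exists (delta_mx (Ordinal n0) (Ordinal n0)); split; [exact: pure_density | exact: pure_val].
by move=> rho Hd; exact: lower.
Qed.
End Part1.

Section Lim.
Variable R : realType.

Lemma bound_d (x : R) : 2 <= x -> `|ln (x ^+ 2 - 1) - 2 * ln x| <= 1.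
Proof.
move=> hx.
have x2 : 4 <= x ^+ 2 by rewrite expr2; nra.
have p1 : 0 < x ^+ 2 - 1 by lra.
have p2 : 0 < x ^+ 2 by lra.
have px : 0 < x by lra.
have E : 2 * ln x = ln (x ^+ 2) by rewrite lnXn // mulr_natl.
rewrite E ler_norml; apply/andP; split.
  have H := @le_ln1Dx R (x ^+ 2 / (x ^+ 2 - 1) - 1).
  have E2 : 1 + (x ^+ 2 / (x ^+ 2 - 1) - 1) = x ^+ 2 / (x ^+ 2 - 1) by ring.
  rewrite E2 ln_div ?posrE // in H.
  have H2 : x ^+ 2 / (x ^+ 2 - 1) - 1 = 1 / (x ^+ 2 - 1) by field; rewrite gt_eqF.
  have H3 : 1 / (x ^+ 2 - 1) <= 1.
    by rewrite ler_pdivrMr // mul1r; lra.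
  have H4 : 0 <= 1 / (x ^+ 2 - 1) by rewrite divr_ge0 //; lra.
  rewrite H2 in H; have := H ltac:(lra); lra.
have : ln (x ^+ 2 - 1) <= ln (x ^+ 2) by rewrite ler_ln ?posrE //; lra.
lra.
Qed.

Lemma bound_q (y : R) : 0 < y -> y <= 1 -> `|y * ln y| <= 1.
Proof.
move=> y0 y1; rewrite ler_norml; apply/andP; split; last first.
  have := ln_le0 y1; nra.
have H := @le_ln1Dx R (y^-1 - 1).
have E2 : 1 + (y^-1 - 1) = y^-1 by ring.
rewrite E2 lnV ?posrE // in H.
have Hy : 0 < y^-1 by rewrite invr_gt0.
have := H ltac:(lra) => H1.
have H2 : y * (- ln y) <= y * (y^-1 - 1) by rewrite ler_wpM2l // ltW.
rewrite mulrBr mulfV ?gt_eqF // in H2.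
nra.
Qed.

Lemma fin_step (A t u v : R) : - u <= A <= 0 -> - v <= t <= v -> 0 <= u ->
  `|- (A + t)| <= u + v.
Proof. move=> /andP [h1 h2] /andP [h3 h4] h5; rewrite normrN ler_norml; apply/andP; split; lra. Qed.

Lemma est (x p : R) : 2 <= x -> 0 <= p -> p <= 1 ->
  `|p - (- (x * p / (x + 1)) * ln (x * p / (x ^+ 2 - 1)) -
         (1 - x * p / (x + 1)) * ln (1 - x * p / (x + 1))) / ln x|
   <= 1 / x + (2 + `|ln p|) / ln x.
Proof.
move=> hx hp0 hp1.
have lx : 0 < ln x by apply: ln_gt0; lra.
have q0 : 0 <= x * p / (x + 1) by rewrite divr_ge0 ?mulr_ge0 //; lra.
have q1 : x * p / (x + 1) < 1 by rewrite ltr_pdivrMr; nra.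
set q := x * p / (x + 1) in q0 q1 *.
have hd := @bound_d x hx; rewrite ler_norml in hd; case/andP: hd => hd1 hd2.
set d := ln (x ^+ 2 - 1) - 2 * ln x in hd1 hd2.
have x4 : 4 <= x ^+ 2 by rewrite expr2; nra.
have L1 : - q * ln (x * p / (x ^+ 2 - 1)) = q * ln x + q * (d - ln p).
  have [p0|pp] := eqVneq p 0.
    by rewrite /q p0; ring.
  have pp' : 0 < p by rewrite lt_def pp hp0.
  rewrite ln_div ?posrE ?mulr_gt0 //; last lra; last lra.
  rewrite lnM ?posrE //; last lra.
  rewrite /d; ring.
have hc := @bound_q (1 - q) ltac:(lra) ltac:(lra).
rewrite ler_norml in hc; case/andP: hc => hc1 hc2.
set c := (1 - q) * ln (1 - q) in hc1 hc2.
have hlp : - `|ln p| <= ln p <= `|ln p| by rewrite -ler_norml.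
case/andP: hlp => hl1 hl2.
have hN1 : q * (d - ln p) - c <= 2 + `|ln p| by nra.
have hN2 : - (2 + `|ln p|) <= q * (d - ln p) - c by nra.
have E : p - (- q * ln (x * p / (x ^+ 2 - 1)) - c) / ln x =
   - ((q - p) + (q * (d - ln p) - c) / ln x).
  by rewrite L1; field; rewrite gt_eqF.
rewrite E; apply: fin_step.
- have Eq : q - p = - (p / (x + 1)) by rewrite /q; field; rewrite gt_eqF //; lra.
  have H1 : p / (x + 1) <= 1 / x.
    rewrite ler_pdivrMr; last lra.
    rewrite mulrC mulrA ler_pdivlMr; last lra.
    nra.
  have H2 : 0 <= p / (x + 1) by rewrite divr_ge0 //; lra.
  rewrite Eq; apply/andP; split; lra.
- apply/andP; split.
    by rewrite -mulNr ler_pM2r ?invr_gt0.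
  by rewrite ler_pM2r ?invr_gt0.
- by rewrite divr_ge0 //; lra.
Qed.
End Lim.

Lemma small_sum (R : realType) (x e K : R) : 0 < e -> 0 <= K -> 2 / e < x ->
  expR (2 * K / e) < x -> 1 / x + K / ln x < e.
Proof.
move=> e0 K0 h1 h2.
have x0 : 0 < x by apply: lt_trans h1; rewrite divr_gt0.
have hl : 2 * K / e < ln x.
  by rewrite -(expRK (2 * K / e)) ltr_ln ?posrE ?expR_gt0.
have Ee : e * (2 * K / e) = 2 * K by field; rewrite gt_eqF.
have Ee2 : e * (2 / e) = 2 by field; rewrite gt_eqF.
have hKe : 0 <= 2 * K / e by rewrite divr_ge0 ?mulr_ge0 //; lra.
have lx : 0 < ln x by lra.
have A1 : 1 / x < e / 2.
  rewrite ltr_pdivrMr //.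
  nra.
have A2 : K / ln x < e / 2.
  rewrite ltr_pdivrMr //.
  nra.
lra.
Qed.

Theorem mainTheorem3 (R : realType) (p : R) (hp0 : 0 <= p) (hp1 : p <= 1) :
  (forall (n : nat) (X : 'I_(n ^ 2 - 1) -> 'M[R[i]]_n),
      (2 <= n)%N -> gell_mann_basis X ->
      is_min_output_entropy X p (@Smin_formula R n p)) /\
  (forall (X : forall n : nat, 'I_(n ^ 2 - 1) -> 'M[R[i]]_n) (s : nat -> R),
      (forall n : nat, (2 <= n)%N -> gell_mann_basis (X n)) ->
      (forall n : nat, (2 <= n)%N -> is_min_output_entropy (X n) p (s n)) ->
      (fun n : nat => s n / ln (n%:R : R)) @ \oo --> p).
Proof.
split.
  by move=> n X hn HX; apply: part1.
move=> X s HX Hs.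
have Es : forall n, (2 <= n)%N -> s n = Smin_formula n p.
  move=> n hn; have [[r1 [Hd1 E1]] H1] := Hs n hn.
  have [[r0 [Hd0 E0]] H0] := @part1 R p n (X n) hp0 hp1 hn (HX n hn).
  apply/eqP; rewrite eq_le; apply/andP; split; [rewrite -E0; exact: H1 | rewrite -E1; exact: H0].
set K := 2 + `|ln p|.
have K0 : 0 <= K by rewrite /K addr_ge0.
apply/cvgrPdist_lt => e e0.
near=> n.
have hn : (2 <= n)%N by near: n; exists 2%N.
have hx : 2 <= (n%:R : R) by rewrite (ler_nat R 2 n).
have g1 : 2 / e < (n%:R : R) by near: n; exact: nbhs_infty_gtr.
have g2 : expR (2 * K / e) < (n%:R : R) by near: n; exact: nbhs_infty_gtr.
rewrite Es // /Smin_formula; apply: le_lt_trans (@est R _ p hx hp0 hp1) _.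
exact: small_sum.
Unshelve. all: by end_near.
Qed.
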